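(* The set $\mathtt{REV}$ of injective (equivalently, reversible) cellular automata on $\Sigma^\mathbb{Z}$ is a closed subset of $\mathtt{CA}$ equipped with the pointwise topology.
   Context: $\Sigma$ is a finite alphabet with $|\Sigma|\ge 2$, and $\Sigma^\mathbb{Z}$ carries the product (Cantor) topology. The shift $\sigma:\Sigma^\mathbb{Z}\to\Sigma^\mathbb{Z}$ is $\sigma(x)_i=x_{i+1}$. A cellular automaton (CA) is a continuous map $c:\Sigma^\mathbb{Z}\to\Sigma^\mathbb{Z}$ with $c\circ\sigma=\sigma\circ c$; $\mathtt{CA}$ is the set of all CA on $\Sigma^\mathbb{Z}$, and $\mathtt{REV}\subseteq\mathtt{CA}$ is the set of injective CA. The pointwise topology on $\mathtt{CA}$ is the topology generated by the subbase consisting of the sets $U_x(a)=\{c\in\mathtt{CA}\mid c(x)_0=a\}$ for $x\in\Sigma^\mathbb{Z}$, $a\in\Sigma$. *)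

(* Defs.v *)
From mathcomp Require Import all_boot.
From Stdlib Require Import ZArith List.
Set Implicit Arguments. Unset Strict Implicit. Unset Printing Implicit Defensive.

Definition config (Sigma : Type) := Z -> Sigma.

Definition shift (Sigma : Type) (x : config Sigma) : config Sigma :=
  fun i => x (i + 1)%Z.

(* Continuity for the product (Cantor) topology on Sigma^Z (Sigma discrete),
   written out: each output coordinate depends (locally) only on finitely many
   input coordinates, i.e. for every x and i there is a cylinder
   neighbourhood of x on which c(.)_i is constant. *)
Definition cantor_continuous (Sigma : Type) (c : config Sigma -> config Sigma) :=
  forall (x : config Sigma) (i : Z), exists n : nat,
    forall y : config Sigma,
      (forall j : Z, (Z.abs j <= Z.of_nat n)%Z -> y j = x j) -> c y i = c x i.

Definition is_CA (Sigma : Type) (c : config Sigma -> config Sigma) :=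
  cantor_continuous c /\ forall x : config Sigma, c (shift x) = shift (c x).

Record CA (Sigma : Type) := MkCA {
  ca_map :> config Sigma -> config Sigma;
  ca_isCA : is_CA ca_map }.

Definition REV (Sigma : Type) : CA Sigma -> Prop :=
  fun c => injective (ca_map c).

(* Topology generated by a subbase (U i)_{i : I} on a set X:
   O is open iff each point of O lies in a finite intersection of subbasic
   sets contained in O (the empty intersection being X). *)
Definition open_gen (X I : Type) (U : I -> X -> Prop) (O : X -> Prop) :=
  forall c : X, O c ->
    exists l : list I, (forall p, In p l -> U p c) /\
      (forall d : X, (forall p, In p l -> U p d) -> O d).

Definition closed_gen (X I : Type) (U : I -> X -> Prop) (S : X -> Prop) :=
  open_gen U (fun c => ~ S c).

(* Subbase of the pointwise topology on CA: U_x(a) = {c | c(x)_0 = a}. *)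
Definition pointwise_subbase (Sigma : Type) :
  (config Sigma * Sigma) -> CA Sigma -> Prop :=
  fun p c => ca_map c p.1 0%Z = p.2.

(* Main.v *)
Require Import Defs.
From mathcomp Require Import all_boot.
From Stdlib Require Import ZArith List Lia Classical ClassicalEpsilon FunctionalExtensionality.

Set Implicit Arguments. Unset Strict Implicit.
Local Open Scope Z_scope.

Lemma php (T : finType) (I : Type) (s : I -> Z) (Q : I -> Prop) (g : I -> T) :
  (forall N, exists i, N <= s i /\ Q i) ->
  exists t, forall N, exists i, N <= s i /\ Q i /\ g i = t.
Proof.
  move=> H. apply: NNPP => Hn.
  have Hb : forall t, exists Nt, forall i, Nt <= s i -> Q i -> g i <> t.
  { move=> t. apply: NNPP => Hc. apply: Hn. exists t. move=> N. apply: NNPP => Hd.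
    apply: Hc. exists N. move=> i H1 H2 H3. apply: Hd. exists i. tauto. }
  have key : forall l : list T, (exists N0, forall i, N0 <= s i -> Q i -> g i \in l) -> False.
  { elim=> [|t l IH] [N0 HN0].
    - have [i [H1 H2]] := H N0. by have := HN0 i H1 H2.
    - have [Nt HNt] := Hb t. apply: IH. exists (Z.max N0 Nt). move=> i H1 H2.
      have := HN0 i ltac:(lia) H2. rewrite seq.in_cons => /orP [/eqP E|//].
      by exfalso; apply: (HNt i ltac:(lia) H2). }
  apply: (key (enum T)). exists 0. move=> i _ _. by rewrite mem_enum.
Qed.

Definition shiftn (Sigma : Type) (k : Z) (x : config Sigma) : config Sigma :=
  fun j => x (j + k).

Lemma SH_nat (Sigma : Type) (c : CA Sigma) (n : nat) x i :
  c x (i + Z.of_nat n) = c (shiftn (Z.of_nat n) x) i.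
Proof.
  elim: n x i => [|n IH] x i.
  - have E : shiftn (Z.of_nat 0) x = x.
    { apply: functional_extensionality => j. rewrite /shiftn /=. f_equal; lia. }
    rewrite E. f_equal; simpl; lia.
  - have E : shiftn (Z.of_nat n.+1) x = Defs.shift (shiftn (Z.of_nat n) x).
    { apply: functional_extensionality => j. rewrite /shiftn /Defs.shift. f_equal; lia. }
    rewrite E. have [_ Hs] := ca_isCA c. rewrite Hs /Defs.shift -IH. f_equal; lia.
Qed.

Lemma SH (Sigma : Type) (c : CA Sigma) (k : Z) x i :
  c x (i + k) = c (shiftn k x) i.
Proof.
  case: (Z_le_gt_dec 0 k) => hk.
  - have -> : k = Z.of_nat (Z.to_nat k) by lia. apply: SH_nat.
  - set z := shiftn k x.
    have E : x = shiftn (Z.of_nat (Z.to_nat (-k))) z.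
    { apply: functional_extensionality => j. rewrite /z /shiftn. f_equal; lia. }
    rewrite {1}E -SH_nat. f_equal; lia.
Qed.

Lemma PER (Sigma : Type) (c : CA Sigma) (p : Z) x :
  0 < p -> (forall j, x j = x (j mod p)) -> forall i, c x i = c x (i mod p).
Proof.
  move=> hp Hx i.
  have E : shiftn (i / p * p) x = x.
  { apply: functional_extensionality => j. rewrite /shiftn (Hx (j + _)) (Hx j).
    rewrite Z.mod_add //. lia. }
  rewrite {1}(Z.div_mod i p); last lia.
  rewrite Z.add_comm (Z.mul_comm p) SH E //.
Qed.

Fixpoint iter_eps (A : Type) (inh : inhabited A) (P0 : A -> Prop)
  (St : nat -> A -> A -> Prop) (n : nat) : A :=
  match n with
  | O => epsilon inh P0
  | S n' => epsilon inh (St n' (iter_eps inh P0 St n'))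
  end.

Lemma iter_eps_inv A inh P0 St (G : nat -> A -> Prop) :
  (exists a, P0 a) -> (forall a, P0 a -> G 0%nat a) ->
  (forall n a, G n a -> exists b, St n a b) ->
  (forall n a b, St n a b -> G n.+1 b) ->
  forall n, G n (iter_eps inh P0 St n) /\
            St n (iter_eps inh P0 St n) (iter_eps inh P0 St n.+1).
Proof.
  move=> H0 HG0 Hex HSt.
  have HG : forall n, G n (iter_eps inh P0 St n).
  { elim=> [|n IH] /=. apply: HG0. exact: epsilon_spec.
    apply: (HSt n (iter_eps inh P0 St n)). apply: epsilon_spec. exact: Hex. }
  move=> n; split; first exact: HG. simpl. apply: epsilon_spec. apply: Hex. exact: HG.
Qed.
Lemma UC (Sigma : finType) (c : config Sigma -> config Sigma) :
  cantor_continuous c ->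
  exists r : Z, 0 <= r /\ forall x y, (forall j, Z.abs j <= r -> x j = y j) -> c x 0 = c y 0.
Proof.
  move=> Hc. apply: NNPP => Hn.
  have Hbad : forall r : Z, exists x y, (forall j, Z.abs j <= r -> x j = y j) /\ c x 0 <> c y 0.
  { move=> r. apply: NNPP => H1. apply: Hn. exists (Z.max 0 r). split; first lia.
    move=> x y Hxy. apply: NNPP => H2. apply: H1. exists x, y. split=> // j hj.
    apply: Hxy; lia. }
  have [x0 _] := Hbad 0.
  have inh : inhabited (config Sigma) := inhabits x0.
  pose Q (m : Z) (P : config Sigma) (i : Z * config Sigma * config Sigma) :=
    (forall j, Z.abs j <= i.1.1 -> i.1.2 j = i.2 j) /\ c i.1.2 0 <> c i.2 0 /\
    (forall j, Z.abs j <= m -> i.1.2 j = P j).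
  pose good (m : Z) (P : config Sigma) := forall N, exists i, N <= i.1.1 /\ Q m P i.
  have [P0 HP0] : exists P, good 0 P.
  { have Hinf : forall N, exists i : Z * config Sigma * config Sigma, N <= i.1.1 /\
       ((forall j, Z.abs j <= i.1.1 -> i.1.2 j = i.2 j) /\ c i.1.2 0 <> c i.2 0).
    { move=> N. have [x [y [h1 h2]]] := Hbad N. exists (N, x, y); simpl; split; [lia|tauto]. }
    have [t Ht] := @php _ _ (fun i : Z * config Sigma * config Sigma => i.1.1) _
                      (fun i : Z * config Sigma * config Sigma => i.1.2 0) Hinf.
    exists (fun _ => t). move=> N. have [i [h1 [[h2 h3] h4]]] := Ht N.
    exists i. split=> //. split=> //. split=> // j hj. have -> : j = 0 by lia. exact h4. }
  have step : forall m P, 0 <= m -> good m P ->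
      exists P', good (m + 1) P' /\ (forall j, Z.abs j <= m -> P' j = P j).
  { move=> m P hm HP.
    have [t Ht] := @php _ _ (fun i : Z * config Sigma * config Sigma => i.1.1) (Q m P)
      (fun i : Z * config Sigma * config Sigma => (i.1.2 (-(m+1)), i.1.2 (m+1))) HP.
    pose P' := fun j => if Z.eq_dec j (-(m+1)) then t.1 else if Z.eq_dec j (m+1) then t.2 else P j.
    exists P'. split.
    - move=> N. have [i [h1 [[h2 [h3 h4]] h5]]] := Ht N. exists i. split=> //.
      split=> //. split=> //. move=> j hj. rewrite /P'.
      destruct (Z.eq_dec j (-(m+1))) as [e|ne1]; first by subst j; simpl; rewrite -h5.
      simpl. destruct (Z.eq_dec j (m+1)) as [e|ne2]; first by subst j; simpl; rewrite -h5.
      apply: h4; lia.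
    - move=> j hj. rewrite /P'. destruct (Z.eq_dec j (-(m+1))); first lia.
      destruct (Z.eq_dec j (m+1)); first lia. done. }
  pose St (n : nat) (P P' : config Sigma) :=
    good (Z.of_nat n + 1) P' /\ (forall j, Z.abs j <= Z.of_nat n -> P' j = P j).
  pose pat := iter_eps inh (good 0) St.
  have HSt : forall n a b, St n a b -> good (Z.of_nat n.+1) b.
  { move=> n a b h. rewrite Nat2Z.inj_succ. exact: h.1. }
  have Hpat := @iter_eps_inv _ inh (good 0) St (fun n P => good (Z.of_nat n) P)
    (ex_intro _ P0 HP0) (fun a h => h)
    (fun n a h => step _ _ (Nat2Z.is_nonneg n) h)
    HSt.
  have coh : forall d k j, Z.abs j <= Z.of_nat k -> pat (k + d)%coq_nat j = pat k j.
  { elim=> [|d IH] k j hj; first by rewrite Nat.add_0_r.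
    rewrite Nat.add_succ_r. have [_ [_ h]] := Hpat (k + d)%coq_nat.
    rewrite /pat h; last lia. exact: IH. }
  pose z := fun j => pat (Z.abs_nat j) j.
  have agz : forall (n : nat) j, Z.abs j <= Z.of_nat n -> z j = pat n j.
  { move=> n j hj. rewrite /z.
    have hk := Zabs2Nat.id_abs j.
    move: hk; set a := Z.abs_nat j => hk.
    have -> : n = Nat.add a (Nat.sub n a).
    { clearbody a. lia. }
    rewrite coh //. lia. }
  have [n Hn'] := Hc z 0.
  have [hg _] := Hpat n.
  have [[[r x] y] [h1 [h2 [h3 h4]]]] := hg (Z.of_nat n).
  simpl in *.
  apply: h3.
  have e1 : c x 0 = c z 0.
  { apply: Hn'. move=> j hj. rewrite h4 // (agz n) //. }
  have e2 : c y 0 = c z 0.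
  { apply: Hn'. move=> j hj. rewrite -h2; last lia. rewrite h4 // (agz n) //. }
  by rewrite e1 e2.
Qed.

Lemma LOC (Sigma : finType) (c : CA Sigma) r :
  (forall x y, (forall j, Z.abs j <= r -> x j = y j) -> c x 0 = c y 0) ->
  forall x y i, (forall j, i - r <= j <= i + r -> x j = y j) -> c x i = c y i.
Proof.
  move=> H x y i Hxy. rewrite -(Z.add_0_l i) !SH. apply: H => j hj.
  rewrite /shiftn. apply: Hxy; lia.
Qed.

Definition periodic_pair (Sigma : finType) (c : CA Sigma) :=
  exists p, 0 < p /\ exists x' y' : config Sigma,
    (forall j, x' j = x' (j mod p)) /\ (forall j, y' j = y' (j mod p)) /\
    (exists j, x' j <> y' j) /\ (forall i, 0 <= i < p -> c x' i = c y' i).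

Lemma caseA (Sigma : finType) (c : CA Sigma) r (hr : 0 <= r)
  (Hloc : forall x y i, (forall j, i - r <= j <= i + r -> x j = y j) -> c x i = c y i)
  x y M j0 : 0 <= M -> Z.abs j0 <= M -> x j0 <> y j0 ->
  (forall j, M < Z.abs j -> x j = y j) -> (forall i, c x i = c y i) ->
  periodic_pair c.
Proof.
  move=> hM hj0 hd Hout Hc.
  have [K hK] : exists K, K = M + 2 * r by eauto.
  have [p hp] : exists p, p = 2 * K + 1 by eauto.
  exists p; split; first lia.
  have phi_mod : forall j, ((j mod p) + K) mod p = (j + K) mod p.
  { move=> j. rewrite Z.add_mod_idemp_l //. lia. }
  have phi_in : forall j, -K <= j <= K -> (j + K) mod p - K = j.
  { move=> j hj. rewrite Z.mod_small; lia. }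
  exists (fun j => x ((j + K) mod p - K)), (fun j => y ((j + K) mod p - K)).
  split; first by move=> j /=; rewrite phi_mod.
  split; first by move=> j /=; rewrite phi_mod.
  split. { exists j0 => /=. rewrite phi_in //. lia. }
  move=> i hi. case: (Z_le_gt_dec i (M + r)) => hi2.
  - transitivity (c x i).
    { apply: Hloc => j hj /=. rewrite phi_in //. lia. }
    rewrite Hc. apply: Hloc => j hj /=. rewrite phi_in //. lia.
  have phi_hi : forall j, K < j <= p + K -> (j + K) mod p - K = j - p.
  { move=> j hj. have -> : j + K = (j + K - p) + 1 * p by ring.
    rewrite Z.mod_add; last lia. rewrite Z.mod_small; lia. }
  case: (Z_le_gt_dec i (p - M - r - 1)) => hi3.
  - apply: Hloc => j hj /=. apply: Hout.
    case: (Z_le_gt_dec j K) => hjK.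
    + rewrite phi_in; lia.
    + rewrite phi_hi; lia.
  - transitivity (c (shiftn (-p) x) i).
    { apply: Hloc => j hj /=. rewrite phi_hi; last lia. rewrite /shiftn. f_equal; lia. }
    rewrite -SH Hc SH.
    apply: Hloc => j hj /=. rewrite phi_hi; last lia. rewrite /shiftn. f_equal; lia.
Qed.

Lemma caseB (Sigma : finType) (c : CA Sigma) r (hr : 0 <= r)
  (Hloc : forall x y i, (forall j, i - r <= j <= i + r -> x j = y j) -> c x i = c y i)
  x y a b : a < b -> r <= b - a -> x a <> y a ->
  (forall t, 0 <= t < 2 * r -> x (a - r + t) = x (b - r + t) /\ y (a - r + t) = y (b - r + t)) ->
  (forall i, c x i = c y i) -> periodic_pair c.
Proof.
  move=> hab hr2 hd Hst Hc.
  have [p hp] : exists p, p = b - a by eauto.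
  have hp0 : 0 < p by lia.
  exists p; split => //.
  have win : forall z : config Sigma,
      (forall t, 0 <= t < 2 * r -> z (a - r + t) = z (b - r + t)) ->
      forall j, a - r <= j < b + r -> z (a + (j - a) mod p) = z j.
  { move=> z Hz j hj. case: (Z_lt_le_dec j a) => h1.
    - have -> : (j - a) mod p = j - a + p.
      { have -> : j - a = (j - a + p) + (-1) * p by ring.
        rewrite Z.mod_add; last lia. rewrite Z.mod_small; lia. }
      have := Hz (j - a + r) ltac:(lia).
      have -> : a - r + (j - a + r) = j by ring.
      move=> ->. f_equal; lia.
    - case: (Z_lt_le_dec j b) => h2.
      + rewrite Z.mod_small; last lia. f_equal; lia.
      + have -> : (j - a) mod p = j - a - p.
        { have -> : j - a = (j - a - p) + 1 * p by ring.
          rewrite Z.mod_add; last lia. rewrite Z.mod_small; lia. }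
        have := Hz (j - b + r) ltac:(lia).
        have -> : b - r + (j - b + r) = j by ring.
        move=> <-. f_equal; lia. }
  pose x' := fun j => x (a + (j - a) mod p).
  pose y' := fun j => y (a + (j - a) mod p).
  have hpx : forall j, x' j = x' (j mod p).
  { move=> j. by rewrite /x' Zminus_mod_idemp_l. }
  have hpy : forall j, y' j = y' (j mod p).
  { move=> j. by rewrite /y' Zminus_mod_idemp_l. }
  exists x', y'. split => //. split => //. split.
  { exists a. rewrite /x' /y' Z.sub_diag Zmod_0_l Z.add_0_r //. }
  move=> i hi.
  have [hb1 hb2] := Z.mod_pos_bound (i - a) p hp0.
  set i2 := a + (i - a) mod p.
  have e : i2 mod p = i mod p.
  { rewrite /i2 Z.add_mod_idemp_r; last lia. f_equal; ring. }
  rewrite (PER c hp0 hpx i) (PER c hp0 hpy i) -e -(PER c hp0 hpx i2) -(PER c hp0 hpy i2).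
  transitivity (c x i2).
  { apply: Hloc => j hj. rewrite /x'. apply: win; [move=> t ht; exact: (Hst t ht).1 | lia]. }
  rewrite Hc. apply: Hloc => j hj. rewrite /y'. symmetry.
  apply: win; [move=> t ht; exact: (Hst t ht).2 | lia].
Qed.

Lemma key (Sigma : finType) (c : CA Sigma) r (hr : 0 <= r)
  (Hloc : forall x y i, (forall j, i - r <= j <= i + r -> x j = y j) -> c x i = c y i)
  x y j0 : x j0 <> y j0 -> (forall i, c x i = c y i) -> periodic_pair c.
Proof.
  move=> hd Hc.
  case: (classic (exists M, 0 <= M /\ forall j, M < Z.abs j -> x j = y j)) => [[M [hM HM]]|HnA].
  - apply: (@caseA Sigma c r hr Hloc x y M j0) => //.
    case: (Z_le_gt_dec (Z.abs j0) M) => // h. exfalso; apply: hd; apply: HM; lia.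
  - have Hinf : forall N, exists j, N <= Z.abs j /\ x j <> y j.
    { move=> N. apply: NNPP => H. apply: HnA. exists (Z.max 0 N). split; first lia.
      move=> j hj. apply: NNPP => ne. apply: H. exists j. split; [lia|done]. }
    pose n := Z.to_nat (2 * r).
    pose g := fun j => ([ffun t : 'I_n => x (j - r + Z.of_nat t)],
                       [ffun t : 'I_n => y (j - r + Z.of_nat t)]).
    have [t Ht] := @php _ Z (fun j => Z.abs j) (fun j => x j <> y j) g Hinf.
    have [j1 [h1 [d1 g1]]] := Ht 0.
    have [j2 [h2 [d2 g2]]] := Ht (Z.abs j1 + 2 * r + 1).
    have Est : forall t0, 0 <= t0 < 2 * r ->
        x (j1 - r + t0) = x (j2 - r + t0) /\ y (j1 - r + t0) = y (j2 - r + t0).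
    { move=> t0 ht. have ho : ssrnat.leq (S (Z.to_nat t0)) n.
      { apply/ssrnat.leP. rewrite /n. lia. }
      have E : g j1 = g j2 by rewrite g1 g2.
      have E1 : (g j1).1 (Ordinal ho) = (g j2).1 (Ordinal ho) by rewrite E.
      have E2 : (g j1).2 (Ordinal ho) = (g j2).2 (Ordinal ho) by rewrite E.
      rewrite /g /= !ffunE /= Z2Nat.id in E1 E2; try lia. by split. }
    case: (Z_lt_le_dec j1 j2) => hlt.
    + apply: (@caseB Sigma c r hr Hloc x y j1 j2) => //; lia.
    + apply: (@caseB Sigma c r hr Hloc x y j2 j1) => //; try lia.
      move=> t0 ht. have [e1 e2] := Est t0 ht. by split.
Qed.

Close Scope Z_scope.

Theorem proposition3p2 (Sigma : finType) (hSigma : 1 < #|Sigma|) :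
  closed_gen (@pointwise_subbase Sigma) (@REV Sigma).
Proof.
  move=> c Hc.
  have [x [y [Exy Nxy]]] : exists x y, c x = c y /\ x <> y.
  { apply: NNPP => H. apply: Hc => x y E. apply: NNPP => ne. apply: H. by exists x, y. }
  have [j0 hj0] : exists j, x j <> y j.
  { apply: NNPP => H. apply: Nxy. apply: functional_extensionality => j.
    apply: NNPP => ne. apply: H. by exists j. }
  have [r [hr Hr]] := UC (ca_isCA c).1.
  have Hloc := LOC Hr.
  have Hci : forall i, c x i = c y i by move=> i; rewrite Exy.
  have [p [hp [x' [y' [hpx [hpy [[j1 hj1] Heq]]]]]]] := key hr Hloc hj0 Hci.
  exists (flat_map (fun n : nat =>
     (shiftn (Z.of_nat n) x', c x' (Z.of_nat n)) ::
     (shiftn (Z.of_nat n) y', c x' (Z.of_nat n)) :: nil) (List.seq 0 (Z.to_nat p))).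
  split.
  - move=> q /in_flat_map [n [/in_seq hn hq]].
    case: hq => [<-|[<-|[]]]; rewrite /pointwise_subbase /=.
    + by rewrite -SH Z.add_0_l.
    + rewrite -SH Z.add_0_l. symmetry. apply: Heq. lia.
  - move=> d Hd Hinj. apply: hj1.
    have Ed : d x' = d y'.
    { apply: functional_extensionality => i.
      rewrite (PER d hp hpx i) (PER d hp hpy i).
      have [hb1 hb2] := Z.mod_pos_bound i p hp.
      have hn : Z.of_nat (Z.to_nat (i mod p)%Z) = (i mod p)%Z by lia.
      have mem : In (Z.to_nat (i mod p)%Z) (List.seq 0 (Z.to_nat p)).
      { apply/in_seq. lia. }
      have h1 := Hd (shiftn (i mod p)%Z x', c x' (i mod p)%Z).
      have h2 := Hd (shiftn (i mod p)%Z y', c x' (i mod p)%Z).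
      rewrite -hn in h1 h2.
      have {}h1 := h1 ltac:(apply/in_flat_map; exists (Z.to_nat (i mod p)%Z); split => //; left; done).
      have {}h2 := h2 ltac:(apply/in_flat_map; exists (Z.to_nat (i mod p)%Z); split => //; right; left; done).
      rewrite /pointwise_subbase /= in h1 h2.
      rewrite -hn -(Z.add_0_l (Z.of_nat _)) !SH h1 h2 //. }
    by rewrite (Hinj x' y' Ed).
Qed.
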